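(* There are $\mathfrak{c}$ many infinite subsets of $\omega$ which are pairwise almost oscillating.
   Context: Two sets $A, B \subseteq \omega$ are oscillating if for every two-element set $\{x, y\} \subseteq A$ and every two-element set $\{w, z\} \subseteq B$ we have $|y - x| \neq |z - w|$. They are almost oscillating if there is $n \in \omega$ such that $A \setminus n$ and $B \setminus n$ are oscillating (here $n = \{0, \dots, n-1\}$). $\mathfrak{c}$ denotes the cardinality of the continuum. *)

(* Defs.v *)
From Stdlib Require Import Arith.

Definition absdiff (x y : nat) : nat := (x - y) + (y - x).

Definition oscillating (A B : nat -> Prop) : Prop :=
  forall x y w z : nat,
    A x -> A y -> x <> y -> B w -> B z -> w <> z ->
    absdiff y x <> absdiff z w.

Definition setminus_init (A : nat -> Prop) (n : nat) : nat -> Prop :=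
  fun x => A x /\ n <= x.

Definition almost_oscillating (A B : nat -> Prop) : Prop :=
  exists n : nat, oscillating (setminus_init A n) (setminus_init B n).

Definition infinite_set (A : nat -> Prop) : Prop :=
  forall n : nat, exists m : nat, n <= m /\ A m.

(* Main.v *)
Require Import Defs.
From Stdlib Require Import Arith Lia Classical FunctionalExtensionality.

Fixpoint code (s : nat -> bool) (n : nat) : nat :=
  match n with
  | 0 => 1
  | S n' => 2 * code s n' + (if s n' then 1 else 0)
  end.

Lemma code_bounds s n : 2 ^ n <= code s n < 2 ^ (S n).
Proof.
  induction n as [|n IH]; simpl in *; [lia|].
  destruct (s n); lia.
Qed.

Lemma code_inj_same s t n : code s n = code t n -> forall i, i < n -> s i = t i.
Proof.
  induction n as [|n IH]; intros H i Hi; [lia|].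
  simpl in H.
  assert (Hb : s n = t n /\ code s n = code t n).
  { destruct (s n), (t n); split; auto; lia. }
  destruct Hb as [Hb Hc].
  destruct (Nat.eq_dec i n) as [->|Hne]; auto.
  apply IH; auto; lia.
Qed.

Lemma code_inj s t n m : code s n = code t m -> n = m.
Proof.
  intros H.
  destruct (lt_eq_lt_dec n m) as [[Hl|Hl]|Hl]; auto.
  - pose proof (code_bounds s n); pose proof (code_bounds t m).
    assert (2 ^ S n <= 2 ^ m) by (apply Nat.pow_le_mono_r; lia). lia.
  - pose proof (code_bounds s n); pose proof (code_bounds t m).
    assert (2 ^ S m <= 2 ^ n) by (apply Nat.pow_le_mono_r; lia). lia.
Qed.

Lemma G a b c d : b < a -> d < c -> 3 ^ a - 3 ^ b = 3 ^ c - 3 ^ d -> a = c /\ b = d.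
Proof.
  intros Hab Hcd H.
  assert (Hac : a = c).
  { destruct (lt_eq_lt_dec a c) as [[Hl|Hl]|Hl]; auto.
    - assert (3 ^ d <= 3 ^ (c - 1)) by (apply Nat.pow_le_mono_r; lia).
      assert (3 ^ a <= 3 ^ (c - 1)) by (apply Nat.pow_le_mono_r; lia).
      assert (3 ^ c = 3 * 3 ^ (c - 1)) by (rewrite <- Nat.pow_succ_r'; f_equal; lia).
      assert (0 < 3 ^ (c - 1)) by (apply Nat.neq_0_lt_0, Nat.pow_nonzero; lia).
      lia.
    - assert (3 ^ b <= 3 ^ (a - 1)) by (apply Nat.pow_le_mono_r; lia).
      assert (3 ^ c <= 3 ^ (a - 1)) by (apply Nat.pow_le_mono_r; lia).
      assert (3 ^ a = 3 * 3 ^ (a - 1)) by (rewrite <- Nat.pow_succ_r'; f_equal; lia).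
      assert (0 < 3 ^ (a - 1)) by (apply Nat.neq_0_lt_0, Nat.pow_nonzero; lia).
      lia. }
  subst c. split; auto.
  assert (3 ^ b < 3 ^ a) by (apply Nat.pow_lt_mono_r; lia).
  assert (3 ^ d < 3 ^ a) by (apply Nat.pow_lt_mono_r; lia).
  apply (Nat.pow_inj_r 3); lia.
Qed.

Lemma pairs a b c d : a <> b -> c <> d ->
  absdiff (3 ^ b) (3 ^ a) = absdiff (3 ^ d) (3 ^ c) ->
  a = c \/ a = d \/ b = c \/ b = d.
Proof.
  unfold absdiff; intros Hab Hcd H.
  destruct (proj1 (Nat.lt_gt_cases a b) Hab) as [H1|H1];
  destruct (proj1 (Nat.lt_gt_cases c d) Hcd) as [H2|H2];
  pose proof (Nat.pow_lt_mono_r 3 _ _ ltac:(lia) H1);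
  pose proof (Nat.pow_lt_mono_r 3 _ _ ltac:(lia) H2).
  - destruct (G b a d c) as [? ?]; auto; lia.
  - destruct (G b a c d) as [? ?]; auto; lia.
  - destruct (G a b d c) as [? ?]; auto; lia.
  - destruct (G a b c d) as [? ?]; auto; lia.
Qed.

Definition Fam (s : nat -> bool) : nat -> Prop := fun x => exists n, x = 3 ^ code s n.

Lemma disj s t k : s k <> t k -> forall x,
  Fam s x -> Fam t x -> 3 ^ (2 ^ S k) <= x -> False.
Proof.
  intros Hk x [n ->] [m Hm] Hx.
  apply Nat.pow_inj_r in Hm; [|lia].
  pose proof (code_inj _ _ _ _ Hm); subst m.
  assert (2 ^ S k <= code s n).
  { destruct (le_lt_dec (2 ^ S k) (code s n)); auto.
    assert (3 ^ code s n < 3 ^ 2 ^ S k) by (apply Nat.pow_lt_mono_r; lia). lia. }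
  pose proof (code_bounds s n).
  assert (k < n).
  { destruct (le_lt_dec n k); auto.
    assert (2 ^ S n <= 2 ^ S k) by (apply Nat.pow_le_mono_r; lia). lia. }
  apply Hk, (code_inj_same s t n Hm); auto.
Qed.

Lemma infF s : infinite_set (Fam s).
Proof.
  intro n. exists (3 ^ code s n). split; [|exists n; auto].
  pose proof (code_bounds s n).
  assert (n < 2 ^ n) by (apply Nat.pow_gt_lin_r; lia).
  assert (code s n < 3 ^ code s n) by (apply Nat.pow_gt_lin_r; lia). lia.
Qed.

Lemma osc s t : s <> t -> almost_oscillating (Fam s) (Fam t).
Proof.
  intros Hst.
  assert (exists k, s k <> t k) as [k Hk].
  { apply NNPP; intro Hn. apply Hst, functional_extensionality; intro k.
    apply NNPP; intro; apply Hn; eauto. }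
  exists (3 ^ (2 ^ S k)).
  intros x y w z [Hx Nx] [Hy Ny] Hxy [Hw Nw] [Hz Nz] Hwz Heq.
  destruct Hx as [a ->] ; destruct Hy as [b ->]; destruct Hw as [c ->]; destruct Hz as [d ->].
  assert (code s a <> code s b) by (intro E; apply Hxy; rewrite E; auto).
  assert (code t c <> code t d) by (intro E; apply Hwz; rewrite E; auto).
  destruct (pairs _ _ _ _ H H0 Heq) as [E|[E|[E|E]]].
  - apply (disj s t k Hk (3 ^ code s a)); [exists a|exists c|]; auto; rewrite E; auto.
  - apply (disj s t k Hk (3 ^ code s a)); [exists a|exists d|]; auto; rewrite E; auto.
  - apply (disj s t k Hk (3 ^ code s b)); [exists b|exists c|]; auto; rewrite E; auto.
  - apply (disj s t k Hk (3 ^ code s b)); [exists b|exists d|]; auto; rewrite E; auto.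
Qed.

Theorem proposition10 :
  exists F : (nat -> bool) -> (nat -> Prop),
    (forall s t : nat -> bool, F s = F t -> s = t) /\
    (forall s : nat -> bool, infinite_set (F s)) /\
    (forall s t : nat -> bool, s <> t -> almost_oscillating (F s) (F t)).
Proof.
  exists Fam. split; [|split; [exact infF|exact osc]].
  intros s t E. apply NNPP; intro Hst.
  assert (exists k, s k <> t k) as [k Hk].
  { apply NNPP; intro Hn. apply Hst, functional_extensionality; intro k.
    apply NNPP; intro; apply Hn; eauto. }
  destruct (infF s (3 ^ (2 ^ S k))) as [x [Hx Fx]].
  apply (disj s t k Hk x); auto. rewrite <- E; auto.
Qed.
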